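(* Let $K\neq0$ and let $(\mathcal M,\rho)$ be a semimetric space such that, if $K>0$, $\rho(A,B)+\rho(B,C)+\rho(A,C)<2\pi/\sqrt K$ for every triple of distinct points $A,B,C\in\mathcal M$. If $(\mathcal M,\rho)$ satisfies the one-sided four point $\operatorname{cosq}_K$ condition, then $\rho$ satisfies the triangle inequality, i.e. $(\mathcal M,\rho)$ is a metric space.
   Context: A semimetric space is a set with a symmetric nonnegative distance $\rho$ with $\rho(P,Q)=0$ iff $P=Q$ (no triangle inequality assumed). Let $\kappa=\sqrt{|K|}$. For $A\neq P$, $B\neq Q$ (with $\rho(A,P),\rho(B,Q),\rho(A,B)<\pi/\sqrt K$ if $K>0$), put $x=\rho(A,P)$, $y=\rho(B,Q)$, $a=\rho(A,B)$, $b=\rho(P,Q)$, $d=\rho(P,B)$, $f=\rho(A,Q)$ (points may coincide across the two pairs, e.g. $B=A$); for $K>0$ $$\operatorname{cosq}_K(\overrightarrow{AP},\overrightarrow{BQ})=\frac{\cos\kappa b+\cos\kappa x\cos\kappa y}{\sin\kappa x\sin\kappa y}-\frac{(\cos\kappa x+\cos\kappa d)(\cos\kappa y+\cos\kappa f)}{(1+\cos\kappa a)\sin\kappa x\sin\kappa y},$$ and for $K<0$ $$\operatorname{cosq}_K(\overrightarrow{AP},\overrightarrow{BQ})=\frac{(\cosh\kappa x+\cosh\kappa d)(\cosh\kappa y+\cosh\kappa f)}{(1+\cosh\kappa a)\sinh\kappa x\sinh\kappa y}-\frac{\cosh\kappa b+\cosh\kappa x\cosh\kappa y}{\sinh\kappa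 x\sinh\kappa y}.$$ Upper/lower four point $\operatorname{cosq}_K$ condition: $\operatorname{cosq}_K\le1$ / $\ge-1$ for all such quadruples; one-sided: at least one holds. *)

(* Defs.v *)
From Stdlib Require Import Reals.
Open Scope R_scope.

Definition semimetric {M : Type} (rho : M -> M -> R) : Prop :=
  (forall P Q, rho P Q = rho Q P) /\
  (forall P Q, 0 <= rho P Q) /\
  (forall P Q, rho P Q = 0 <-> P = Q).

Definition kappa (K : R) : R := sqrt (Rabs K).

(* cosq_K as a function of the six distances
   x = rho(A,P), y = rho(B,Q), a = rho(A,B), b = rho(P,Q),
   d = rho(P,B), f = rho(A,Q). *)
Definition cosq_val (K x y a b d f : R) : R :=
  let k := kappa K in
  if Rlt_dec 0 K then
    (cos (k*b) + cos (k*x) * cos (k*y)) / (sin (k*x) * sin (k*y))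
    - ((cos (k*x) + cos (k*d)) * (cos (k*y) + cos (k*f)))
      / ((1 + cos (k*a)) * sin (k*x) * sin (k*y))
  else
    ((cosh (k*x) + cosh (k*d)) * (cosh (k*y) + cosh (k*f)))
      / ((1 + cosh (k*a)) * sinh (k*x) * sinh (k*y))
    - (cosh (k*b) + cosh (k*x) * cosh (k*y)) / (sinh (k*x) * sinh (k*y)).

Definition cosq {M : Type} (K : R) (rho : M -> M -> R) (A P B Q : M) : R :=
  cosq_val K (rho A P) (rho B Q) (rho A B) (rho P Q) (rho P B) (rho A Q).

Definition admissible {M : Type} (K : R) (rho : M -> M -> R) (A P B Q : M) : Prop :=
  A <> P /\ B <> Q /\
  (0 < K -> rho A P < PI / sqrt K /\ rho B Q < PI / sqrt K /\ rho A B < PI / sqrt K).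

Definition upper_cosq_condition {M : Type} (K : R) (rho : M -> M -> R) : Prop :=
  forall A P B Q : M, admissible K rho A P B Q -> cosq K rho A P B Q <= 1.

Definition lower_cosq_condition {M : Type} (K : R) (rho : M -> M -> R) : Prop :=
  forall A P B Q : M, admissible K rho A P B Q -> -1 <= cosq K rho A P B Q.

Definition one_sided_cosq_condition {M : Type} (K : R) (rho : M -> M -> R) : Prop :=
  upper_cosq_condition K rho \/ lower_cosq_condition K rho.

Definition triangle_inequality {M : Type} (rho : M -> M -> R) : Prop :=
  forall A B C : M, rho A C <= rho A B + rho B C.

(* Main.v *)
Require Import Defs.
From Stdlib Require Import Reals Lra Classical.
Open Scope R_scope.

Lemma div_ge_m1 t D : 0 < D -> -1 <= t / D -> -D <= t.
Proof.
  intros HD H. apply Rmult_le_compat_r with (r := D) in H; [|lra].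
  replace (t / D * D) with t in H by (field; lra). lra.
Qed.

Lemma div_le_1 t D : 0 < D -> t / D <= 1 -> t <= D.
Proof.
  intros HD H. apply Rmult_le_compat_r with (r := D) in H; [|lra].
  replace (t / D * D) with t in H by (field; lra). lra.
Qed.

Lemma cos_gt_m1 t : 0 < t < PI -> -1 < cos t.
Proof.
  intros H. rewrite <- cos_PI. apply cos_decreasing_1; lra.
Qed.

Lemma sinh_pos u : 0 < u -> 0 < sinh u.
Proof. intros. rewrite <- sinh_0. apply sinh_lt. lra. Qed.

Lemma cosh_pos u : 0 < cosh u.
Proof. unfold cosh. pose proof (exp_pos u). pose proof (exp_pos (-u)). lra. Qed.

Lemma kappa_pos K : K <> 0 -> 0 < kappa K.
Proof. intros. unfold kappa. apply sqrt_lt_R0. apply Rabs_pos_lt. auto. Qed.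

Lemma pos_lower K x y w : 0 < K -> 0 < kappa K * x < PI -> 0 < kappa K * y < PI ->
  -1 <= cosq_val K x y 0 w x y ->
  cos (kappa K * x) * cos (kappa K * y) - sin (kappa K * x) * sin (kappa K * y)
    <= cos (kappa K * w).
Proof.
  intros HK Hx Hy H. unfold cosq_val in H.
  destruct (Rlt_dec 0 K) as [_|]; [|lra].
  set (k := kappa K) in *.
  rewrite Rmult_0_r, cos_0 in H.
  pose proof (sin_gt_0 _ (proj1 Hx) (proj2 Hx)).
  pose proof (sin_gt_0 _ (proj1 Hy) (proj2 Hy)).
  set (sx := sin (k*x)) in *. set (sy := sin (k*y)) in *.
  set (cx := cos (k*x)) in *. set (cy := cos (k*y)) in *. set (cw := cos (k*w)) in *.
  replace ((cw + cx * cy) / (sx * sy) - (cx + cx) * (cy + cy) / ((1 + 1) * sx * sy))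
    with ((cw - cx*cy)/(sx*sy)) in H by (field; lra).
  apply div_ge_m1 in H; [lra|nra].
Qed.

Lemma pos_upper K x y w : 0 < K -> 0 < kappa K * x < PI -> 0 < kappa K * y < PI ->
  cosq_val K x y y x w 0 <= 1 ->
  cos (kappa K * x) * cos (kappa K * y) - sin (kappa K * x) * sin (kappa K * y)
    <= cos (kappa K * w).
Proof.
  intros HK Hx Hy H. unfold cosq_val in H.
  destruct (Rlt_dec 0 K) as [_|]; [|lra].
  set (k := kappa K) in *.
  rewrite Rmult_0_r, cos_0 in H.
  pose proof (sin_gt_0 _ (proj1 Hx) (proj2 Hx)).
  pose proof (sin_gt_0 _ (proj1 Hy) (proj2 Hy)).
  pose proof (cos_gt_m1 _ Hy).
  set (sx := sin (k*x)) in *. set (sy := sin (k*y)) in *.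
  set (cx := cos (k*x)) in *. set (cy := cos (k*y)) in *. set (cw := cos (k*w)) in *.
  replace ((cx + cx * cy) / (sx * sy) - (cx + cw) * (cy + 1) / ((1 + cy) * sx * sy))
    with ((cx*cy - cw)/(sx*sy)) in H by (field; lra).
  apply div_le_1 in H; [lra|nra].
Qed.

Lemma neg_lower K x y w : K < 0 -> 0 < kappa K * x -> 0 < kappa K * y ->
  -1 <= cosq_val K x y 0 w x y ->
  cosh (kappa K * w) <=
  cosh (kappa K * x) * cosh (kappa K * y) + sinh (kappa K * x) * sinh (kappa K * y).
Proof.
  intros HK Hx Hy H. unfold cosq_val in H.
  destruct (Rlt_dec 0 K) as [|_]; [lra|].
  set (k := kappa K) in *.
  rewrite Rmult_0_r, cosh_0 in H.
  pose proof (sinh_pos _ Hx). pose proof (sinh_pos _ Hy).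
  set (sx := sinh (k*x)) in *. set (sy := sinh (k*y)) in *.
  set (cx := cosh (k*x)) in *. set (cy := cosh (k*y)) in *. set (cw := cosh (k*w)) in *.
  replace ((cx + cx) * (cy + cy) / ((1 + 1) * sx * sy) - (cw + cx * cy) / (sx * sy))
    with ((cx*cy - cw)/(sx*sy)) in H by (field; lra).
  apply div_ge_m1 in H; [lra|nra].
Qed.

Lemma neg_upper K x y w : K < 0 -> 0 < kappa K * x -> 0 < kappa K * y ->
  cosq_val K x y y x w 0 <= 1 ->
  cosh (kappa K * w) <=
  cosh (kappa K * x) * cosh (kappa K * y) + sinh (kappa K * x) * sinh (kappa K * y).
Proof.
  intros HK Hx Hy H. unfold cosq_val in H.
  destruct (Rlt_dec 0 K) as [|_]; [lra|].
  set (k := kappa K) in *.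
  rewrite Rmult_0_r, cosh_0 in H.
  pose proof (sinh_pos _ Hx). pose proof (sinh_pos _ Hy). pose proof (cosh_pos (k*y)).
  set (sx := sinh (k*x)) in *. set (sy := sinh (k*y)) in *.
  set (cx := cosh (k*x)) in *. set (cy := cosh (k*y)) in *. set (cw := cosh (k*w)) in *.
  replace ((cx + cw) * (cy + 1) / ((1 + cy) * sx * sy) - (cx + cx * cy) / (sx * sy))
    with ((cw - cx*cy)/(sx*sy)) in H by (field; lra).
  apply div_le_1 in H; [lra|nra].
Qed.

Lemma cosh_conclude u v w : 0 <= u -> 0 <= v -> 0 <= w ->
  cosh w <= cosh u * cosh v + sinh u * sinh v -> w <= u + v.
Proof.
  intros Hu Hv Hw H. destruct (Rle_lt_dec w (u+v)) as [|Hlt]; auto.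
  exfalso. unfold cosh, sinh in H. rewrite !exp_Ropp in H.
  pose proof (exp_pos u). pose proof (exp_pos v).
  assert (Hm : exp (u+v) < exp w) by (apply exp_increasing; lra).
  assert (Hm1 : 1 <= exp (u+v)).
  { rewrite <- exp_0. destruct (Req_dec (u+v) 0) as [E|E].
    - rewrite E. lra.
    - left. apply exp_increasing. lra. }
  rewrite exp_plus in Hm, Hm1.
  set (a := exp u) in *. set (b := exp v) in *. set (c := exp w) in *.
  replace ((c + / c) / 2) with ((c*c + 1)/(2*c)) in H by (field; lra).
  replace ((a + / a) / 2 * ((b + / b) / 2) + (a - / a) / 2 * ((b - / b) / 2))
    with ((a*b*(a*b) + 1)/(2*(a*b))) in H by (field; lra).
  assert (Hab : 0 < a*b) by nra.
  apply Rmult_le_compat_r with (r := 2*c*(2*(a*b))) in H; [|nra].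
  replace ((c * c + 1) / (2 * c) * (2 * c * (2 * (a * b)))) with ((c*c+1)*(2*(a*b))) in H
    by (field; lra).
  replace ((a * b * (a * b) + 1) / (2 * (a * b)) * (2 * c * (2 * (a * b))))
    with ((a*b*(a*b)+1)*(2*c)) in H by (field; lra).
  assert (0 < (c - a*b) * (c*(a*b) - 1)) by (apply Rmult_lt_0_compat; nra).
  nra.
Qed.

Lemma cos_conclude u v w : 0 < u < PI -> 0 < v < PI -> 0 <= w -> u + v + w < 2*PI ->
  cos u * cos v - sin u * sin v <= cos w -> w <= u + v.
Proof.
  intros Hu Hv Hw Hp H. rewrite <- cos_plus in H.
  destruct (Rle_lt_dec w (u+v)) as [|Hlt]; auto. exfalso.
  destruct (Rle_lt_dec w PI).
  - assert (cos w < cos (u+v)) by (apply cos_decreasing_1; lra). lra.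
  - assert (cos (2*PI - w) < cos (u+v)) by (apply cos_decreasing_1; lra).
    rewrite cos_minus, cos_2PI, sin_2PI in H0. lra.
Qed.

Theorem mainTheorem16 (M : Type) (rho : M -> M -> R) (K : R) :
  K <> 0 ->
  semimetric rho ->
  (0 < K -> forall A B C : M, A <> B -> B <> C -> A <> C ->
     rho A B + rho B C + rho A C < 2 * PI / sqrt K) ->
  one_sided_cosq_condition K rho ->
  triangle_inequality rho.
Proof.
  intros HK0 [Hsym [Hnn Hz]] Hper Hone A B C.
  destruct (classic (A = B)) as [E|NAB].
  { subst. rewrite (proj2 (Hz B B) eq_refl). lra. }
  destruct (classic (B = C)) as [E|NBC].
  { subst. rewrite (proj2 (Hz C C) eq_refl). lra. }
  destruct (classic (A = C)) as [E|NAC].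
  { subst. rewrite (proj2 (Hz C C) eq_refl). pose proof (Hnn C B). pose proof (Hnn B C). lra. }
  assert (HxA : 0 < rho B A).
  { destruct (Hnn B A) as [|E]; auto. exfalso. apply NAB. symmetry. apply Hz. auto. }
  assert (HyA : 0 < rho B C).
  { destruct (Hnn B C) as [|E]; auto. exfalso. apply NBC. apply Hz. auto. }
  pose proof (Hnn A C) as HwA.
  rewrite (Hsym A B).
  set (x := rho B A) in *. set (y := rho B C) in *. set (w := rho A C) in *.
  pose proof (kappa_pos K HK0) as Hk. set (k := kappa K) in *.
  apply Rmult_le_reg_l with k; auto. rewrite Rmult_plus_distr_l.
  assert (Hkx : 0 < k*x) by nra. assert (Hky : 0 < k*y) by nra.
  assert (Hkw : 0 <= k*w) by nra.
  assert (Elow : cosq K rho B A B C = cosq_val K x y 0 w x y).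
  { unfold cosq. rewrite (proj2 (Hz B B) eq_refl), (Hsym A B). reflexivity. }
  assert (Eup : cosq K rho B A C B = cosq_val K x y y x w 0).
  { unfold cosq. rewrite (proj2 (Hz B B) eq_refl), (Hsym C B), (Hsym A B). reflexivity. }
  destruct (Rtotal_order 0 K) as [HKp|[E|HKn]]; [| exfalso; auto |].
  - assert (Hsq : sqrt K = k).
    { unfold k, kappa. rewrite Rabs_right; lra. }
    pose proof (Hper HKp A B C NAB NBC NAC) as HP.
    rewrite (Hsym A B), Hsq in HP. fold x y w in HP.
    assert (HP' : k*x + k*y + k*w < 2*PI).
    { apply Rmult_lt_compat_l with (r := k) in HP; auto.
      replace (k * (2 * PI / k)) with (2*PI) in HP by (field; lra). lra. }
    destruct (Rlt_le_dec (k*x) PI) as [Hxp|Hxp]; [|lra].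
    destruct (Rlt_le_dec (k*y) PI) as [Hyp|Hyp]; [|lra].
    assert (Hxl : x < PI / sqrt K).
    { rewrite Hsq. apply Rmult_lt_reg_l with k; auto.
      replace (k * (PI / k)) with PI by (field; lra). lra. }
    assert (Hyl : y < PI / sqrt K).
    { rewrite Hsq. apply Rmult_lt_reg_l with k; auto.
      replace (k * (PI / k)) with PI by (field; lra). lra. }
    assert (H0l : 0 < PI / sqrt K).
    { rewrite Hsq. apply Rdiv_lt_0_compat; auto. apply PI_RGT_0. }
    apply cos_conclude; try lra.
    destruct Hone as [Hu|Hl].
    + apply (pos_upper K x y w); try lra; try (fold k; split; lra); try (fold k; lra). rewrite <- Eup. apply Hu.
      unfold admissible. split; [auto|]. split; [auto|].
      intros _. rewrite (Hsym C B). fold x y. repeat split; auto.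
    + apply (pos_lower K x y w); try lra; try (fold k; split; lra); try (fold k; lra). rewrite <- Elow. apply Hl.
      unfold admissible. split; [auto|]. split; [auto|].
      intros _. rewrite (proj2 (Hz B B) eq_refl). fold x y. repeat split; auto.
  - apply cosh_conclude; try lra.
    destruct Hone as [Hu|Hl].
    + apply (neg_upper K x y w); try lra; try (fold k; lra). rewrite <- Eup. apply Hu.
      unfold admissible. split; [auto|]. split; [auto|]. intros; lra.
    + apply (neg_lower K x y w); try lra; try (fold k; lra). rewrite <- Elow. apply Hl.
      unfold admissible. split; [auto|]. split; [auto|]. intros; lra.
Qed.
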